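(* Let $T$ be a compactum and $A$ a discrete set of entourages of $T$. Then for all $\mathbf a,\mathbf b\in A$ and every integer $k\ge1$ the set $\Psi_k(\mathbf a,\mathbf b)=\{\mathbf c\in A:\ \mathbf a-\mathbf c-\mathbf b\ (k)\}$ is finite.
   Context: Let $T$ be a compact Hausdorff space, $S^2T$ the space of unordered pairs of points of $T$ (diagonal allowed), $\Delta^2T$ the diagonal. An entourage is a neighborhood of $\Delta^2T$ in $S^2T$. For an entourage $\mathbf e$, $\Delta_{\mathbf e}$ is the graph distance on $T$ of the graph with vertex set $T$ and edges the pairs in $\mathbf e$; $\Delta_{\mathbf e}(a,b)=\inf_{x\in a,y\in b}\Delta_{\mathbf e}(x,y)$. A set is $\mathbf e$-small if its $\Delta_{\mathbf e}$-diameter is $\le1$. Entourages $\mathbf a,\mathbf b$ are unlinked ($\mathbf a\bowtie\mathbf b$) if $T=a\cup b$ for some $\mathbf a$-small $a$ and $\mathbf b$-small $b$; otherwise linked ($\mathbf a\#\mathbf b$). Standing conventions: every entourage considered is linked with itself and $T$ has $\Delta_{\mathbf a}$-diameter $>4$. For $\mathbf a\bowtie\mathbf b$, $\mathrm{sh}_{\mathbf a}\mathbf b=\bigcap\{a: a\ \mathbf a\text{-small},\ T\setminus a\ \mathbf b\text{-small}\}$; $\mathbf a-\mathbf c-\mathbf b\ (k)$ means $\mathbf a\bowtie\mathbf c\bowtie\mathbf b$ and $\Delta_{\mathbf c}(\mathrm{sh}_{\mathbf c}\mathbf a,\mathrm{sh}_{\mathbf c}\mathbf b)>k$. A set $A$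 of entourages is discrete if for every entourage $\mathbf w$ only finitely many $\mathbf a\in A$ satisfy $\mathbf a\#\mathbf w$. *)

(* Defs.v *)
From Stdlib Require Import List Arith.

Set Implicit Arguments.

Section Top.
Variable T : Type.
Variable is_open : (T -> Prop) -> Prop.

Definition is_topology : Prop :=
  is_open (fun _ => True) /\
  (forall U V, is_open U -> is_open V -> is_open (fun x => U x /\ V x)) /\
  (forall F : (T -> Prop) -> Prop, (forall U, F U -> is_open U) ->
      is_open (fun x => exists U, F U /\ U x)).

Definition compact : Prop :=
  forall F : (T -> Prop) -> Prop,
    (forall U, F U -> is_open U) ->
    (forall x, exists U, F U /\ U x) ->
    exists l : list (T -> Prop),
      (forall U, In U l -> F U) /\ (forall x, exists U, In U l /\ U x).

Definition hausdorff : Prop :=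
  forall x y, x <> y -> exists U V, is_open U /\ is_open V /\ U x /\ V y /\
    (forall z, U z -> V z -> False).

Definition compactum : Prop := is_topology /\ compact /\ hausdorff.

Definition prod_open (W : T -> T -> Prop) : Prop :=
  forall x y, W x y -> exists U V, is_open U /\ is_open V /\ U x /\ V y /\
    (forall u v, U u -> V v -> W u v).

(* An entourage: a neighbourhood of the diagonal in S^2 T.  A subset of
   S^2 T is represented by a symmetric relation on T (the set of pairs
   (x,y) with {x,y} in it); it is a neighbourhood of the diagonal of S^2 T
   iff its preimage in T x T is a neighbourhood of the diagonal of T x T
   (the quotient map T x T -> S^2 T is open). *)
Definition entourage (E : T -> T -> Prop) : Prop :=
  (forall x y, E x y -> E y x) /\
  exists W, prod_open W /\ (forall x, W x x) /\ (forall x y, W x y -> E x y).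
End Top.

Section Ent.
Variable T : Type.

Fixpoint dist_le (E : T -> T -> Prop) (n : nat) (x y : T) : Prop :=
  match n with
  | 0 => x = y
  | S m => dist_le E m x y \/ exists z, dist_le E m x z /\ E z y
  end.

Definition small (E : T -> T -> Prop) (a : T -> Prop) : Prop :=
  forall x y, a x -> a y -> dist_le E 1 x y.

Definition diam_gt (E : T -> T -> Prop) (n : nat) : Prop :=
  exists x y, ~ dist_le E n x y.

(* Delta_E(a,b) > k, with Delta_E(a,b) = inf_{x in a, y in b} Delta_E(x,y) *)
Definition setdist_gt (E : T -> T -> Prop) (a b : T -> Prop) (k : nat) : Prop :=
  forall x y, a x -> b y -> ~ dist_le E k x y.

Definition unlinked (A B : T -> T -> Prop) : Prop :=
  exists a b : T -> Prop, small A a /\ small B b /\ (forall x, a x \/ b x).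

Definition linked (A B : T -> T -> Prop) : Prop := ~ unlinked A B.

Definition sh (A B : T -> T -> Prop) : T -> Prop :=
  fun x => forall a : T -> Prop,
    small A a -> small B (fun y => ~ a y) -> a x.

Definition between (A C B : T -> T -> Prop) (k : nat) : Prop :=
  unlinked A C /\ unlinked C B /\ setdist_gt C (sh C A) (sh C B) k.

Definition finite_set (S : (T -> T -> Prop) -> Prop) : Prop :=
  exists l : list (T -> T -> Prop), forall c, S c -> In c l.

Definition discrete (is_open : (T -> Prop) -> Prop)
    (A : (T -> T -> Prop) -> Prop) : Prop :=
  forall W, entourage is_open W -> finite_set (fun a => A a /\ linked a W).

Definition Psi (A : (T -> T -> Prop) -> Prop) (k : nat)
    (a b : T -> T -> Prop) : (T -> T -> Prop) -> Prop :=
  fun c => A c /\ between a c b k.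
End Ent.

(* Main.v *)
Require Import Defs.
From Stdlib Require Import List Arith Classical.

Lemma dist_S (T : Type) (E : T -> T -> Prop) n x y :
  dist_le E n x y -> dist_le E (S n) x y.
Proof. intro H; simpl; now left. Qed.

Lemma dist_mono (T : Type) (E : T -> T -> Prop) n m x y :
  n <= m -> dist_le E n x y -> dist_le E m x y.
Proof. induction 1; auto. intro H'; apply dist_S; auto. Qed.

Lemma dist_cat (T : Type) (E : T -> T -> Prop) m n x z y :
  dist_le E m x z -> dist_le E n z y -> dist_le E (m + n) x y.
Proof.
  revert y. induction n as [|n IH]; intros y H1 H2.
  - simpl in H2; subst; now rewrite Nat.add_0_r.
  - rewrite Nat.add_succ_r. simpl in H2 |- *.
    destruct H2 as [H2|[w [H2 H3]]].
    + left; eauto.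
    + right; exists w; split; eauto.
Qed.

Lemma small_mono (T : Type) (E F : T -> T -> Prop) (p : T -> Prop) :
  (forall x y, E x y -> F x y) -> small E p -> small F p.
Proof.
  intros HEF Hs x y Hx Hy. destruct (Hs x y Hx Hy) as [H|[z [H1 H2]]].
  - now left.
  - right; exists z; auto.
Qed.

Lemma sh_nonempty (T : Type) (c a : T -> T -> Prop) :
  linked c c -> diam_gt a 4 -> exists x, sh c a x.
Proof.
  intros Hcc [x0 [y0 Hd]].
  destruct (classic (sh c a x0)) as [H|Hx]; [eauto|].
  destruct (classic (sh c a y0)) as [H|Hy]; [eauto|].
  exfalso. unfold sh in Hx, Hy.
  apply not_all_ex_not in Hx as [p1 Hx].
  apply not_all_ex_not in Hy as [p2 Hy].
  assert (Hp1 : small c p1 /\ small a (fun y => ~ p1 y) /\ ~ p1 x0) by tauto.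
  assert (Hp2 : small c p2 /\ small a (fun y => ~ p2 y) /\ ~ p2 y0) by tauto.
  destruct Hp1 as [S1 [C1 N1]], Hp2 as [S2 [C2 N2]].
  apply Hcc. exists p1, p2. repeat split; auto.
  intro z. destruct (classic (p1 z)) as [?|n1]; [now left|].
  destruct (classic (p2 z)) as [?|n2]; [now right|].
  exfalso. apply Hd.
  apply (@dist_mono T a 2 4); [repeat constructor|].
  apply (@dist_cat T a 1 1 x0 z y0); [apply C1 | apply C2]; auto.
Qed.

Theorem lemma3p19 (T : Type) (is_open : (T -> Prop) -> Prop)
  (HT : compactum is_open)
  (A : (T -> T -> Prop) -> Prop)
  (HAent : forall a, A a -> entourage is_open a)
  (HAconv : forall a, A a -> linked a a /\ diam_gt a 4)
  (HAdisc : discrete is_open A) :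
  forall a b, A a -> A b -> forall k : nat, 1 <= k ->
    finite_set (Psi A k a b).
Proof.
  intros a b Ha Hb k Hk.
  set (W := fun x y => a x y /\ b x y).
  assert (HW : entourage is_open W).
  { destruct HT as [[Ttop [Tint Tun]] _].
    destruct (HAent a Ha) as [sa [Wa [Oa [Da Ia]]]].
    destruct (HAent b Hb) as [sb [Wb [Ob [Db Ib]]]].
    split. { intros x y [h1 h2]; split; auto. }
    exists (fun x y => Wa x y /\ Wb x y). split; [|split].
    - intros x y [h1 h2].
      destruct (Oa x y h1) as [U1 [V1 [oU1 [oV1 [u1 [v1 H1]]]]]].
      destruct (Ob x y h2) as [U2 [V2 [oU2 [oV2 [u2 [v2 H2]]]]]].
      exists (fun x => U1 x /\ U2 x), (fun x => V1 x /\ V2 x).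
      repeat split; auto; firstorder.
    - intro x; split; auto.
    - intros x y [h1 h2]; split; auto. }
  destruct (HAdisc W HW) as [l Hl].
  exists l. intros c [Hc [Hca [Hcb Hdist]]]. apply Hl. split; auto.
  destruct (HAconv c Hc) as [Hcc _].
  destruct (@sh_nonempty T c a Hcc (proj2 (HAconv a Ha))) as [x Hx].
  destruct (@sh_nonempty T c b Hcc (proj2 (HAconv b Hb))) as [y Hy].
  intros [p [q [Sp [Sq Cov]]]].
  assert (Hcomp : forall E, (forall u v, W u v -> E u v) ->
            small E (fun y => ~ p y)).
  { intros E HE u v Hu Hv. apply (@small_mono T W E q HE Sq);
    [destruct (Cov u) | destruct (Cov v)]; tauto. }
  assert (px : p x) by (apply Hx; auto; apply Hcomp; intros u v [h _]; exact h).
  assert (py : p y) by (apply Hy; auto; apply Hcomp; intros u v [_ h]; exact h).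
  apply (Hdist x y Hx Hy). apply (@dist_mono T c 1 k x y Hk). apply Sp; auto.
Qed.
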